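(* Let $\mathcal{H}$ be a Hilbert space of finite dimension $d$, let $\rho,\eta\in\mathcal{D}(\mathcal{H})$ be quantum states and let $0<s<1$. Then $\eta=\frac{\rho-s'\tau}{1-s'}$ for some real number $0<s'\le s$ and some state $\tau\in\mathcal{D}(\mathcal{H})$ if and only if $S_m\!\left(\frac1s\rho-\frac{1-s}{s}\eta\right)\ge0$ for all $m=1,2,\dots,d$.
   Context: $\mathcal{D}(\mathcal{H})$ is the set of density operators on $\mathcal{H}$. For a Hermitian operator $X$ on $\mathcal{H}$, define recursively $S_0(X)=1$ and $S_m(X)=\frac1m\sum_{l=1}^m(-1)^{l-1}\operatorname{tr}[X^l]\,S_{m-l}(X)$ for $m\ge1$. *)

(* Defs.v *)
(* finite-dimensional Hilbert space C^d modelled as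
   column vectors over algC; operators are 'M[algC]_d. *)
From HB Require Import structures.
From mathcomp Require Import all_boot all_order all_algebra all_field.
Set Implicit Arguments. Unset Strict Implicit. Unset Printing Implicit Defensive.
Import Order.TTheory GRing.Theory Num.Theory.
Local Open Scope ring_scope.

Definition adjmx (m n : nat) (A : 'M[algC]_(m, n)) : 'M[algC]_(n, m) :=
  map_mx (@Num.conj algC) A^T.

Definition psd (n : nat) (A : 'M[algC]_n) : Prop :=
  adjmx A = A /\ forall v : 'cV[algC]_n, 0 <= (adjmx v *m A *m v) 0 0.

Definition is_state (n : nat) (A : 'M[algC]_n) : Prop :=
  psd A /\ \tr A = 1.

(* Sseq X m = [:: S_0(X); ...; S_m(X)], with
   S_0 = 1, S_m = 1/m * sum_{l=1}^m (-1)^(l-1) tr[X^l] S_{m-l} *)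
Fixpoint Sseq (n : nat) (X : 'M[algC]_n.+1) (m : nat) : seq algC :=
  match m with
  | 0 => [:: 1]
  | m'.+1 =>
      let s := Sseq X m' in
      rcons s ((m'.+1)%:R^-1 *
        \sum_(1 <= l < m'.+2) (-1) ^+ l.+1 * \tr (X ^+ l) * nth 0 s (m'.+1 - l))
  end.

Definition Sfun (n : nat) (X : 'M[algC]_n.+1) (m : nat) : algC :=
  nth 0 (Sseq X m) m.

(* Main.v *)
Require Import Defs.
From HB Require Import structures.
From mathcomp Require Import all_boot all_order all_algebra all_field.
From mathcomp Require Import ring.
Import Order.TTheory GRing.Theory Num.Theory.
Local Open Scope ring_scope.
Local Open Scope sesquilinear_scope.

Section Newton.
Variable R : comNzRingType.

Definition Epoly (ls : seq R) : {poly R} := \prod_(x <- ls) (1 + x%:P * 'X).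
Definition pw (ls : seq R) (l : nat) : R := \sum_(x <- ls) x ^+ l.

Lemma tele (g : nat -> R) k :
  \sum_(1 <= l < k.+1) (-1) ^+ l.+1 * (g l + g l.+1) = g 1%N + (-1) ^+ k.+1 * g k.+1.
Proof.
elim: k => [|k IH]; first by rewrite big_geq // expr1 mulN1r subrr.
rewrite big_nat_recr //= IH !exprS; ring.
Qed.

Definition newton_id ls := forall k : nat,
  k%:R * (Epoly ls)`_k =
  \sum_(1 <= l < k.+1) (-1) ^+ l.+1 * pw ls l * (Epoly ls)`_(k - l).

Lemma newton_aux (ls : seq R) : newton_id ls -> forall k : nat,
  \sum_(1 <= l < k.+1) (-1) ^+ l.+1 * pw ls l * ('X * Epoly ls)`_(k - l)
  = k.-1%:R * ('X * Epoly ls)`_k.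
Proof.
move=> N [|k]; first by rewrite big_geq // coefXM /= mulr0.
rewrite big_nat_recr //= subnn coefXM /= mulr0 addr0 coefXM /= N.
apply: eq_big_nat => l /andP[l1 lk].
by rewrite coefXM subSn // /= subSS.
Qed.

Lemma newton ls : newton_id ls.
Proof.
elim: ls => [|x ls IH] k.
  rewrite /Epoly big_nil coefC.
  case: k => [|k]; first by rewrite mul0r big_geq.
  rewrite mulr0 big1_seq // => l /andP[_]; rewrite mem_index_iota => /andP[l1 lk].
  by rewrite /pw big_nil mulr0 mul0r.
have E1 : forall j, (Epoly (x :: ls))`_j = (Epoly ls)`_j + x * ('X * Epoly ls)`_j.
  by move=> j; rewrite /Epoly big_cons -/(Epoly ls) mulrDl mul1r -mulrA coefD coefCM.
have P1 : forall l, pw (x :: ls) l = x ^+ l + pw ls l by move=> l; rewrite /pw big_cons.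
rewrite E1.
transitivity (\sum_(1 <= l < k.+1) (-1) ^+ l.+1 * pw ls l * (Epoly ls)`_(k - l)
  + x * \sum_(1 <= l < k.+1) (-1) ^+ l.+1 * pw ls l * ('X * Epoly ls)`_(k - l)
  + \sum_(1 <= l < k.+1) (-1) ^+ l.+1 * (x ^+ l * ('X * Epoly ls)`_(k.+1 - l)
        + x ^+ l.+1 * ('X * Epoly ls)`_(k.+1 - l.+1))); last first.
  rewrite mulr_sumr -!big_split /=; apply: eq_big_nat => l /andP[l1 lk].
  rewrite E1 P1 subSS [('X * _)`_(k.+1 - l)]coefXM subSn // /=.
  rewrite !exprS; ring.
rewrite (tele (fun l => x ^+ l * ('X * Epoly ls)`_(k.+1 - l))) subnn.
rewrite -IH (newton_aux ls IH) subn1 /= [('X * _)`_0]coefXM /=.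
rewrite !mulr0 addr0 expr1.
case: k => [|k]; first by rewrite coefXM /=; ring.
rewrite /= mulrS; ring.
Qed.
End Newton.
Arguments Epoly {R}. Arguments pw {R}. Arguments newton {R}. Arguments tele {R}.

Lemma size_Sseq n (X : 'M[algC]_n.+1) m : size (Sseq X m) = m.+1.
Proof. by elim: m => //= m IH; rewrite size_rcons IH. Qed.

Lemma nth_Sseq n (X : 'M[algC]_n.+1) m j : (j <= m)%N -> nth 0 (Sseq X m) j = Sfun X j.
Proof.
elim: m => [|m IH]; first by rewrite leqn0 => /eqP ->.
rewrite leq_eqVlt => /orP[/eqP -> //|jm].
by rewrite /= nth_rcons size_Sseq jm IH.
Qed.

Lemma Sfun_Epoly n (X : 'M[algC]_n.+1) (ls : seq algC) :
  (forall l, (0 < l)%N -> \tr (X ^+ l) = pw ls l) ->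
  forall m, Sfun X m = (Epoly ls)`_m.
Proof.
move=> Htr m; elim: m {-2}m (leqnn m) => [|M IH] m.
  by rewrite leqn0 => /eqP ->; rewrite /Sfun /Epoly /= -(@horner_coef0) horner_prod; 
    rewrite big1_seq // => x _; rewrite !hornerE.
rewrite leq_eqVlt => /orP[/eqP ->|]; last by apply: IH.
rewrite /Sfun /= nth_rcons size_Sseq ltnn eqxx.
have nz : M.+1%:R != 0 :> algC by rewrite pnatr_eq0.
rewrite -[RHS](mulKf nz) (newton ls M.+1); congr (_ * _).
apply: eq_big_nat => l /andP[l1 lM].
rewrite Htr // nth_Sseq; last by rewrite leq_subLR -addn1 addnC leq_add2r.
by rewrite IH // leq_subLR -addn1 addnC leq_add2r.
Qed.

Lemma Epoly_cons (x : algC) ls j :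
  (Epoly (x :: ls))`_j = (Epoly ls)`_j + x * (if j is j'.+1 then (Epoly ls)`_j' else 0).
Proof.
by rewrite /Epoly big_cons mulrDl mul1r -mulrA coefD coefCM coefXM; case: j.
Qed.

Lemma Epoly0 (ls : seq algC) : (Epoly ls)`_0 = 1.
Proof. by elim: ls => [|x ls IH]; rewrite ?Epoly_cons ?mulr0 ?addr0 // /Epoly big_nil coefC. Qed.

Lemma Epoly_big (ls : seq algC) j : (size ls < j)%N -> (Epoly ls)`_j = 0.
Proof.
elim: ls j => [|x ls IH] [|j] //=; first by rewrite /Epoly big_nil coefC.
by rewrite ltnS => lj; rewrite Epoly_cons !IH ?mulr0 ?addr0 // ltnW.
Qed.

Lemma Epoly_ge0 (ls : seq algC) : (forall x, x \in ls -> 0 <= x) -> forall j, 0 <= (Epoly ls)`_j.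
Proof.
elim: ls => [|x ls IH] H j.
  by rewrite /Epoly big_nil coefC; case: j.
have IH2 : forall j, 0 <= (Epoly ls)`_j.
  by apply: IH => y yl; apply: H; rewrite in_cons yl orbT.
rewrite Epoly_cons addr_ge0 //; apply: mulr_ge0; first exact: H (mem_head _ _).
by case: j.
Qed.

Lemma Epoly_ge0_inv (ls : seq algC) : (forall x, x \in ls -> x \is Num.real) ->
  (forall j, (1 <= j <= size ls)%N -> 0 <= (Epoly ls)`_j) ->
  forall x, x \in ls -> 0 <= x.
Proof.
move=> Hr He x xl; have xr := Hr x xl.
have Hall : forall j, 0 <= (Epoly ls)`_j.
  move=> [|j]; first by rewrite Epoly0.
  case: (leqP j.+1 (size ls)) => hj; first by apply: He.
  by rewrite Epoly_big.
rewrite real_leNgt ?real0 //; apply/negP => x0.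
set t := - x^-1.
have t0 : 0 < t by rewrite oppr_gt0 invr_lt0.
have : (Epoly ls).[t] = 0.
  rewrite /Epoly horner_prod (big_rem x xl) /= !hornerE.
  by rewrite /t mulrN mulfV ?ltr0_neq0 // subrr mul0r.
have Ene : Epoly ls != 0.
  by apply/eqP => E0; move: (Epoly0 ls); rewrite E0 coef0 => /eqP; rewrite eq_sym oner_eq0.
rewrite horner_coef; have : (0 < size (Epoly ls))%N by rewrite size_poly_gt0.
case: (size (Epoly ls)) => // k _; rewrite big_ord_recl /= Epoly0 expr0 mulr1.
move/eqP; rewrite gt_eqF // ltr_pwDl // sumr_ge0 // => i _.
by rewrite mulr_ge0 // exprn_ge0 // ltW.
Qed.

Lemma adjmxE m n (A : 'M[algC]_(m, n)) : adjmx A = A ^t*.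
Proof. by []. Qed.

Lemma herm_decomp N (X : 'M[algC]_N) : adjmx X = X ->
  exists (P : 'M[algC]_N) (sp : 'rV[algC]_N),
   [/\ P \is unitarymx, X = P^t* *m diag_mx sp *m P & forall i, sp 0 i \is Num.real].
Proof.
move=> H.
have Hh : X \is hermsymmx by apply/is_hermitianmxP; rewrite expr0 scale1r -adjmxE H.
have /orthomx_spectralP E := hermitian_normalmx Hh.
exists (spectralmx X), (spectral_diag X); split.
- exact: spectral_unitarymx.
- by rewrite -invmx_unitary ?spectral_unitarymx.
- by move=> i; have /mxOverP := hermitian_spectral_diag_real Hh; apply.
Qed.

Lemma adjmx_mul m n p (A : 'M[algC]_(m, n)) (B : 'M[algC]_(n, p)) :
  adjmx (A *m B) = adjmx B *m adjmx A.
Proof. by rewrite /adjmx trmx_mul map_mxM. Qed.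

Lemma quad_diag N (sp : 'rV[algC]_N) (w : 'cV[algC]_N) :
  (adjmx w *m diag_mx sp *m w) 0 0 = \sum_i sp 0 i * ((w i 0)^* * w i 0).
Proof.
rewrite -mulmxA mul_diag_mx mxE; apply: eq_bigr => i _.
by rewrite !mxE; ring.
Qed.

Section Spec.
Variables (N : nat) (X P : 'M[algC]_N) (sp : 'rV[algC]_N).
Hypotheses (PU : P \is unitarymx) (XE : X = P^t* *m diag_mx sp *m P).

Lemma PtP : P^t* *m P = 1%:M.
Proof. by rewrite -invmx_unitary // mulVmx // unitarymx_unit. Qed.

Lemma tr_pow l : \tr (X ^+ l) = \sum_i sp 0 i ^+ l.
Proof.
have -> : X ^+ l = P^t* *m diag_mx (\row_i sp 0 i ^+ l) *m P.
  elim: l => [|l IH].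
    have -> : diag_mx (\row_i sp 0 i ^+ 0) = 1%:M.
      by apply/matrixP => i j; rewrite !mxE expr0.
    by rewrite mulmx1 PtP.
  rewrite exprSr IH XE -!mulmxE !mulmxA -[_ *m P *m P^t*]mulmxA.
  rewrite (unitarymxP PU) mulmx1 -[_ *m diag_mx _ *m diag_mx _]mulmxA mulmx_diag.
  congr (_ *m diag_mx _ *m _); apply/rowP => i; rewrite !mxE exprSr //.
rewrite mxtrace_mulC mulmxA (unitarymxP PU) mul1mx mxtrace_diag.
by apply: eq_bigr => i _; rewrite mxE.
Qed.

Lemma quadX (v : 'cV[algC]_N) :
  (adjmx v *m X *m v) 0 0 = \sum_i sp 0 i * (((P *m v) i 0)^* * (P *m v) i 0).
Proof.
by rewrite -quad_diag adjmx_mul [adjmx P]adjmxE XE !mulmxA.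
Qed.

Lemma psd_spec : psd X <-> (adjmx X = X /\ forall i, 0 <= sp 0 i).
Proof.
split.
  move=> [H1 H2]; split => // i.
  have := H2 (P^t* *m delta_mx i 0).
  rewrite quadX mulmxA (unitarymxP PU) mul1mx (bigD1 i) //= big1 ?addr0.
    by rewrite !mxE !eqxx /= rmorph1 !mulr1; apply.
  by move=> j ji; rewrite !mxE (negbTE ji) /= !mulr0.
move=> [H1 H2]; split => // v.
rewrite quadX sumr_ge0 // => i _.
by rewrite mulr_ge0 // mulrC mul_conjC_ge0.
Qed.
End Spec.

Lemma psd_Sfun n (X : 'M[algC]_n.+1) : adjmx X = X ->
  (psd X <-> forall m, (1 <= m <= n.+1)%N -> 0 <= Sfun X m).
Proof.
move=> H; have [P [sp [PU XE Hr]]] := herm_decomp _ _ H.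
set ls := [seq sp 0 i | i <- index_enum 'I_n.+1].
have HS : forall m, Sfun X m = (Epoly ls)`_m.
  by apply: Sfun_Epoly => l _; rewrite (@tr_pow _ _ _ _ PU XE) /pw big_map.
have Hsz : size ls = n.+1 by rewrite size_map /index_enum; unlock; rewrite -enumT size_enum_ord.
have Hmem : forall x, x \in ls -> exists i, x = sp 0 i.
  by move=> x /mapP[i _ ->]; exists i.
rewrite (@psd_spec _ _ _ _ PU XE); split.
- move=> [_ Hp] m _; rewrite HS; apply: Epoly_ge0 => x /Hmem [i ->]; exact: Hp.
- move=> Hm; split => // i; apply: (@Epoly_ge0_inv ls).
  + by move=> x /Hmem [j ->]; exact: Hr.
  + by move=> j; rewrite Hsz -HS; apply: Hm.
  + by apply/mapP; exists i => //; rewrite mem_index_enum.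
Qed.

Lemma adjmx_comb n (a b : algC) (A B : 'M[algC]_n) : a \is Num.real -> b \is Num.real ->
  adjmx (a *: A + b *: B) = a *: adjmx A + b *: adjmx B.
Proof.
move=> ar br; apply/matrixP => i j; rewrite !mxE rmorphD !rmorphM /=.
by rewrite (conj_Creal ar) (conj_Creal br).
Qed.

Lemma psd_comb n (a b : algC) (A B : 'M[algC]_n) : 0 <= a -> 0 <= b ->
  psd A -> psd B -> psd (a *: A + b *: B).
Proof.
move=> a0 b0 [HA1 HA2] [HB1 HB2]; split.
  by rewrite adjmx_comb ?ger0_real // HA1 HB1.
move=> v; move: (HA2 v) (HB2 v).
rewrite mulmxDr mulmxDl -!scalemxAr -!scalemxAl mxE !mxE => h1 h2.
by rewrite addr_ge0 // mulr_ge0.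
Qed.

Theorem lemma9 (d : nat) (rho eta : 'M[algC]_d.+1) (s : algC) :
  is_state rho -> is_state eta -> 0 < s < 1 ->
  (exists (s' : algC) (tau : 'M[algC]_d.+1),
      [/\ 0 < s' <= s, is_state tau & eta = (1 - s')^-1 *: (rho - s' *: tau)])
  <->
  (forall m : nat, (1 <= m <= d.+1)%N ->
     0 <= Sfun (s^-1 *: rho - ((1 - s) / s) *: eta) m).
Proof.
move=> [[Hr1 Hr2] trr] [[He1 He2] tre] /andP[s0 s1].
have sn0 : s != 0 by rewrite gt_eqF.
have s1n0 : 1 - s != 0 by rewrite gt_eqF // subr_gt0.
have sr : s \is Num.real by rewrite gtr0_real.
set X := s^-1 *: rho - ((1 - s) / s) *: eta.
have XE : X = s^-1 *: rho + (- ((1 - s) / s)) *: eta by rewrite /X scaleNr.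
have HX : adjmx X = X.
  rewrite XE adjmx_comb ?Hr1 ?He1 // ?rpredN ?rpredM ?rpredV ?rpredB ?real1 //.
rewrite -(@psd_Sfun _ X HX); split.
- move=> [s' [tau [/andP[s'0 s's] [Ht trt] Heta]]].
  have s'1 : s' < 1 by apply: le_lt_trans s1.
  have s'n0 : 1 - s' != 0 by rewrite gt_eqF // subr_gt0.
  have Hrho : rho = (1 - s') *: eta + s' *: tau.
    by rewrite Heta scalerA divff // scale1r subrK.
  have -> : X = (s' / s) *: tau + ((s - s') / s) *: eta.
    rewrite /X Hrho; apply/matrixP => i j; rewrite !mxE; field; exact: sn0.
  apply: psd_comb; [ by rewrite divr_ge0 // ltW | by rewrite divr_ge0 ?subr_ge0 // ltW
    | exact: Ht | by split ].
- move=> HpX; exists s, X; split.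
  + by rewrite s0 lexx.
  + split => //; rewrite XE mxtraceD !mxtraceZ trr tre; field; exact: sn0.
  + apply/matrixP => i j; rewrite !mxE; field; apply/andP; split => //.
Qed.
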